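(* Let $G$ be a group given by a presentation $\langle X \mid R\rangle$ in which $X$ is a (possibly infinite) set of generators, each $x\in X$ satisfies $x^2=e$ (i.e. the relations $x^2=e$ hold for all $x \in X$), and every relation in $R$ has even length. For $I\subseteq X$, let $G_I$ denote the subgroup of $G$ generated by $I$ and let $G^I=\{w\in G : l(wx)>l(w)\ \text{for all } x\in I\}$. Then every element $w\in G$ has a factorisation $w=ab$ with $a\in G^I$, $b\in G_I$ and $l(w)=l(a)+l(b)$.
   Context: For a group $G$ with presentation $\langle X\mid R\rangle$, every $w\in G$ can be written as $x_1^{a_1}\cdots x_r^{a_r}$ with $x_j\in X$, $a_j=\pm1$; the length $l(w)$ is the smallest such $r$, and a reduced expression of $w$ is an expression of $w$ as a product of $l(w)$ elements of $X\cup X^{-1}$. If a relation in $R$ has the form $u=v$ with $u,v$ in the free group $F(X)$, its length is the length of the word $uv^{-1}$ in $F(X)$. *)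

(* Defs.v *)
(* Groups given by presentations <X | R> are
   modelled concretely: elements are words over X ∪ X^{-1}, and equality in
   G is the congruence generated by free cancellation, x^2 = e (x in X) and
   the relations in R. *)
From mathcomp Require Import all_boot.
Set Implicit Arguments. Unset Strict Implicit. Unset Printing Implicit Defensive.

Section Presentation.
Variable X : eqType.

(* a letter (x, false) is x, (x, true) is x^{-1} *)
Definition letter := (X * bool)%type.
Definition word := seq letter.

Definition linv (a : letter) : letter := (a.1, ~~ a.2).
Definition winv (w : word) : word := rev (map linv w).

Definition freered (w : word) : word :=
  foldr (fun a acc => match acc with
                      | b :: t => if b == linv a then t else a :: acc
                      | [::] => [:: a]
                      end) [::] w.

(* length of the relation u = v: length of the reduced word u v^{-1} in F(X) *)
Definition rel_length (r : word * word) : nat := size (freered (r.1 ++ winv r.2)).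

Variable R : word * word -> Prop.

Inductive preseq : word -> word -> Prop :=
| preseq_refl w : preseq w w
| preseq_sym u v : preseq u v -> preseq v u
| preseq_trans u v w : preseq u v -> preseq v w -> preseq u w
| preseq_ctx p q u v : preseq u v -> preseq (p ++ u ++ q) (p ++ v ++ q)
| preseq_free a : preseq [:: a; linv a] [::]
| preseq_sq x : preseq [:: (x, false); (x, false)] [::]
| preseq_rel u v : R (u, v) -> preseq u v.

Definition is_length (w : word) (n : nat) : Prop :=
  (exists w', preseq w w' /\ size w' = n) /\
  (forall w', preseq w w' -> n <= size w').

Definition in_GI (I : X -> Prop) (w : word) : Prop :=
  exists w', preseq w w' /\ (forall a, a \in w' -> I a.1).

Definition in_GupI (I : X -> Prop) (w : word) : Prop :=
  forall x, I x -> forall n m, is_length w n ->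
    is_length (w ++ [:: (x, false)]) m -> n < m.

End Presentation.

(* Main.v *)
Require Import Defs.
From mathcomp Require Import all_boot.
From Stdlib Require Import Classical.
From mathcomp Require Import zify.
Set Implicit Arguments. Unset Strict Implicit.

Lemma size_freered_odd (X : eqType) (w : word X) :
  odd (size (freered w)) = odd (size w).
Proof.
elim: w => [|a w IH] //=.
rewrite -IH.
case: (freered w) => [|b t] //=.
by case: ifP => _ //=; rewrite negbK.
Qed.

Lemma preseq_parity (X : eqType) (R : word X * word X -> Prop)
  (Reven : forall r, R r -> ~~ odd (rel_length r)) u v :
  preseq R u v -> odd (size u) = odd (size v).
Proof.
elim=> //.
- by move=> ? ? ? _ -> _ ->.
- by move=> p q ? ? _ IH; rewrite !size_cat !oddD IH.
- move=> u0 v0 H; have := Reven _ H.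
  rewrite /rel_length size_freered_odd size_cat oddD /winv size_rev size_map /=.
  by case: (odd (size u0)); case: (odd (size v0)).
Qed.

Lemma preseq_catr (X : eqType) (R : word X * word X -> Prop) u v q :
  preseq R u v -> preseq R (u ++ q) (v ++ q).
Proof. by move=> H; have := preseq_ctx [::] q H. Qed.

Lemma preseq_catl (X : eqType) (R : word X * word X -> Prop) u v p :
  preseq R u v -> preseq R (p ++ u) (p ++ v).
Proof. by move=> H; have := preseq_ctx p [::] H; rewrite !cats0. Qed.

Lemma preseq_cat (X : eqType) (R : word X * word X -> Prop) u v u' v' :
  preseq R u u' -> preseq R v v' -> preseq R (u ++ v) (u' ++ v').
Proof.
move=> H1 H2; apply: (preseq_trans (preseq_catr v H1)); exact: preseq_catl.
Qed.

Lemma length_exists (X : eqType) (R : word X * word X -> Prop) w :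
  exists n, is_length R w n.
Proof.
pose P k := exists w', preseq R w w' /\ size w' = k.
suff: forall k, P k -> exists n, is_length R w n.
  by apply; exists w; split=> //; apply: preseq_refl.
elim/ltn_ind=> k IH Pk.
case: (classic (exists j, j < k /\ P j)) => [[j [ltjk Pj]]|N].
  exact: IH ltjk Pj.
exists k; split=> // w' H; rewrite leqNgt; apply/negP=> lt.
by apply: N; exists (size w'); split=> //; exists w'.
Qed.

Lemma length_uniq (X : eqType) (R : word X * word X -> Prop) w n m :
  is_length R w n -> is_length R w m -> n = m.
Proof.
move=> [[w1 [H1 S1]] M1] [[w2 [H2 S2]] M2].
apply/eqP; rewrite eqn_leq; apply/andP; split; [rewrite -S2; exact: M1 | rewrite -S1; exact: M2].
Qed.

Lemma length_le (X : eqType) (R : word X * word X -> Prop) w w' n :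
  is_length R w n -> preseq R w w' -> n <= size w'.
Proof. by move=> [_ M] H; apply: M. Qed.

Lemma length_parity (X : eqType) (R : word X * word X -> Prop)
  (Reven : forall r, R r -> ~~ odd (rel_length r)) w n :
  is_length R w n -> odd n = odd (size w).
Proof.
by move=> [[w' [H <-]] _]; symmetry; apply: preseq_parity Reven _ _ H.
Qed.

Lemma length_sub (X : eqType) (R : word X * word X -> Prop) w u v n p q :
  is_length R w n -> preseq R w (u ++ v) -> is_length R u p ->
  is_length R v q -> n <= p + q.
Proof.
move=> Hw H [[u' [Hu <-]] _] [[v' [Hv <-]] _].
rewrite -size_cat; apply: (length_le Hw).
apply: preseq_trans H _; exact: preseq_cat.
Qed.

Theorem proposition2p2 (X : eqType) (R : word X * word X -> Prop)
  (Reven : forall r, R r -> ~~ odd (rel_length r))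
  (I : X -> Prop) (w : word X) :
  exists (a b : word X) (nw na nb : nat),
    preseq R w (a ++ b) /\ in_GupI R I a /\ in_GI R I b /\
    is_length R w nw /\ is_length R a na /\ is_length R b nb /\
    nw = na + nb.
Proof.
have [n Hn] := length_exists R w.
elim/ltn_ind: n w Hn => n IH w Hn.
case: (classic (in_GupI R I w)) => [G|NG].
  have L0 : is_length R [::] 0.
    by split=> //; exists [::]; split=> //; apply: preseq_refl.
  exists w, [::], n, n, 0; rewrite cats0.
  split; first exact: preseq_refl.
  split=> //; split; first by exists [::]; split=> //; apply: preseq_refl.
  by rewrite addn0.
have [x [Ix [n0 [m [Hn0 [Hm Nlt]]]]]] : exists x, I x /\ exists n0 m,
    is_length R w n0 /\ is_length R (w ++ [:: (x, false)]) m /\ ~ n0 < m.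
  apply: NNPP => N; apply: NG => x Ix n0 m H1 H2.
  apply: NNPP => N2; apply: N; exists x; split=> //; exists n0, m; done.
have en0 := length_uniq Hn0 Hn; subst n0.
have ltmn : m < n.
  rewrite ltn_neqAle; rewrite leqNgt; apply/andP; split; last by apply/negP.
  apply/negP=> /eqP E; subst m.
  have := length_parity Reven Hn; rewrite (length_parity Reven Hm) size_cat addn1 /=.
  by case: (odd (size w)).
have [a [b' [nw' [na [nb' [E [Ga [Gb' [Hnw' [Hna [Hnb' Eq]]]]]]]]]]] := IH m ltmn _ Hm.
have enw := length_uniq Hnw' Hm; subst nw'.
have [nb Hnb] := length_exists R (b' ++ [:: (x, false)]).
exists a, (b' ++ [:: (x, false)]), n, na, nb.
have Ew : preseq R w (a ++ b' ++ [:: (x, false)]).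
  apply: preseq_trans (_ : preseq R w ((w ++ [:: (x, false)]) ++ [:: (x, false)])) _.
    rewrite -catA; apply: preseq_sym; have := preseq_catl w (preseq_sq R x).
    by rewrite cats0.
  by rewrite catA; apply: preseq_catr.
split=> //; split=> //; split.
  case: Gb' => b'' [Hb'' Ib''].
  exists (b'' ++ [:: (x, false)]); split; first exact: preseq_catr.
  move=> c; rewrite mem_cat => /orP[/Ib''//|]; by rewrite inE => /eqP ->.
do 3!split=> //.
have Lx : forall q, is_length R [:: (x, false)] q -> q <= 1.
  by move=> q Hq; have := length_le Hq (preseq_refl R [:: (x, false)]).
have [q Hq] := length_exists R [:: (x, false)].
have le1 : n <= m + q.
  apply: length_sub Hn _ Hm Hq.
  rewrite -catA; apply: preseq_sym; have := preseq_catl w (preseq_sq R x).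
  by rewrite cats0.
have le2 : nb <= nb' + q by apply: length_sub Hnb (preseq_refl _ _) Hnb' Hq.
have le3 : n <= na + nb by apply: length_sub Hn Ew Hna Hnb.
have := Lx q Hq; lia.
Qed.
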